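(* Let $L>0$, $V\in C^0([0,L];\mathbb{R})$, $\varepsilon>0$, $q_\varepsilon\in L^\infty(0,L;\mathbb{R})$. For all $E\in\mathbb{R}$ and all $\psi\in H^2(0,L)\cap H^1_0(0,L)$ with $-\varepsilon^2\psi''+(V+q_\varepsilon)\psi=E\psi$, and all $x,y\in[0,L]$, $$\mathscr{E}(x)\le\exp\Big(\frac1\varepsilon|x-y|\big(\|V-E+1\|_{L^\infty(I_{x,y})}+\|q_\varepsilon\|_\infty\big)\Big)\mathscr{E}(y),$$ where $\mathscr{E}(x)=\varepsilon^2|\psi'(x)|^2+|\psi(x)|^2$ and $I_{x,y}$ is the interval between $x$ and $y$. *)

(* Defs.v *)
From HB Require Import structures.
From mathcomp Require Import all_boot all_order all_algebra.
From mathcomp Require Import all_classical all_reals all_analysis ess_sup_inf.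
Set Implicit Arguments. Unset Strict Implicit. Unset Printing Implicit Defensive.
Import Order.TTheory GRing.Theory Num.Theory Num.Def.
Import numFieldNormedType.Exports.
Local Open Scope classical_set_scope.
Local Open Scope ring_scope.

Section Defs.
Context {R : realType}.

Definition Linf_norm (A : set R) (f : R -> R) : \bar R :=
  ess_sup (@lebesgue_measure R)
    (fun x => (if `[< A x >] then `|f x| else 0)%:E).

Definition in_Linf (A : set R) (f : R -> R) : Prop :=
  measurable_fun A f /\ (Linf_norm A f < +oo)%E.

(* u is (the continuous representative of) an element of H^2(0,L), with
   classical derivative du (continuous on [0,L]) and weak second derivative
   ddu in L^2(0,L): u, du are absolutely continuous with
   u(x) = u(0) + int_0^x du,  du(x) = du(0) + int_0^x ddu  on [0,L]. *)
Definition H2_rep (L : R) (u du ddu : R -> R) : Prop :=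
  [/\ measurable_fun `[0, L] ddu,
      (@lebesgue_measure R).-integrable `[0, L] (fun x => (ddu x)%:E),
      (@lebesgue_measure R).-integrable `[0, L] (fun x => (ddu x ^+ 2)%:E),
      (forall x, 0 <= x <= L ->
          du x = du 0 + Rintegral (@lebesgue_measure R) `[0, x] ddu) &
      (forall x, 0 <= x <= L ->
          u x = u 0 + Rintegral (@lebesgue_measure R) `[0, x] du)].

Definition H2_H10_rep (L : R) (u du ddu : R -> R) : Prop :=
  [/\ H2_rep L u du ddu, u 0 = 0 & u L = 0].

Definition schrodinger_ae (L eps E : R) (V q u ddu : R -> R) : Prop :=
  {ae (@lebesgue_measure R), forall x, [set` `[0, L]] x ->
      - (eps ^+ 2 * ddu x) + (V x + q x) * u x = E * u x}.

End Defs.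

(* Main.v *)
Require Import Defs.
From HB Require Import structures.
From mathcomp Require Import all_boot all_order all_algebra.
From mathcomp Require Import all_classical all_reals all_analysis ess_sup_inf.
From mathcomp Require Import ring lra.
Import Order.TTheory GRing.Theory Num.Theory Num.Def.
Import numFieldNormedType.Exports.
Local Open Scope classical_set_scope.
Local Open Scope ring_scope.

Definition locest {R : realType} (F : R -> R) (K a b : R) :=
  forall s, a <= s <= b -> forall e, 0 < e -> exists2 d, 0 < d &
    forall t, a <= t <= b -> `|t - s| < d -> `|F t - F s| <= (K * F s + e) * `|t - s|.

Lemma gron_fwd {R : realType} (F : R -> R) (K a b : R) :
  0 <= K -> a <= b -> (forall t, a <= t <= b -> 0 <= F t) -> locest F K a b ->
  F b <= expR (K * (b - a)) * F a.
Proof.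
move=> K0 ab F0 loc.
suff H : forall e, 0 < e -> F b <= expR (K * (b - a)) * (F a + e * (b - a)).
  apply/ler_addgt0Pr => e e0.
  set X := expR (K * (b - a)).
  have X0 : 0 < X by apply: expR_gt0.
  have D0 : 0 <= b - a by rewrite subr_ge0.
  have e'0 : 0 < e / (X * (b - a + 1)) by rewrite divr_gt0 // mulr_gt0 // ltr_wpDl.
  apply: (le_trans (H _ e'0)).
  rewrite mulrDr lerD2l mulrA.
  have -> : X * (e / (X * (b - a + 1))) = e / (b - a + 1).
    by field; rewrite ?gt_eqF // ltr_wpDl.
  rewrite mulrAC ler_pdivrMr; last by rewrite ltr_wpDl.
  by rewrite ler_pM2l // lerDl.
move=> eta eta0.
pose H t := expR (K * (t - a)) * (F a + eta * (t - a)).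
have Fa0 : 0 <= F a by apply: F0; rewrite lexx ab.
have Hmono : forall r t, a <= r -> r <= t -> H r <= H t.
  move=> r t ar rt; rewrite /H ler_pM //.
  - nra.
  - by rewrite ler_expR ler_wpM2l // lerD2r.
  - nra.
pose S := [set t | a <= t <= b /\ forall r, a <= r <= t -> F r <= H r].
have Sa : S a.
  split; first by rewrite lexx ab.
  move=> r /andP[ar ra]; have -> : r = a by apply/eqP; rewrite eq_le ar ra.
  by rewrite /H subrr !mulr0 expR0 mul1r addr0.
have ubS : ubound S b by move=> t [/andP[_ ->]].
have hasS : has_sup S by split; [exists a | exists b].
set c := sup S.
have ac : a <= c by apply: sup_upper_bound.
have cb : c <= b by apply: ge_sup => //; exists a.
have below : forall r, a <= r -> r < c -> F r <= H r.
  move=> r ar rc.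
  have rc0 : 0 < c - r by rewrite subr_gt0.
  have [t [_ Ht] rt] := sup_adherent rc0 hasS.
  apply: Ht; rewrite ar /=; move: rt; rewrite opprB addrCA subrr addr0 => /ltW //.
have atc : F c <= H c.
  have [ca|ac'] := eqVneq a c.
    by rewrite -ca; apply: Sa.2; rewrite lexx.
  have ac2 : a < c by rewrite lt_neqAle ac' ac.
  apply/ler_addgt0Pr => e e0.
  have Fc0 : 0 <= F c by apply: F0; rewrite ac cb.
  have C0 : 0 < K * F c + 1 by rewrite ltr_wpDl // mulr_ge0.
  have [d d0 hd] := loc c (introT andP (conj ac cb)) 1 ltr01.
  set m := Num.min (d / 2) (e / (K * F c + 1)).
  have m0 : 0 < m by rewrite lt_min !divr_gt0.
  set r := Num.max a (c - m).
  have ar : a <= r by rewrite le_max lexx.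
  have rc : r < c by rewrite gt_max ac2 /= ltrBlDr ltrDl.
  have cr : c - r <= m by rewrite lerBlDr -lerBlDl le_max lexx orbT.
  have Hr := below r ar rc.
  have Hrc := Hmono r c ar (ltW rc).
  have := hd r; rewrite ar (le_trans (ltW rc) cb) /= => /(_ isT).
  rewrite distrC gtr0_norm ?subr_gt0 //.
  have md : m < d.
    rewrite (le_lt_trans (y := d / 2)) ?ge_min ?lexx //.
    by rewrite ltr_pdivrMr // ltr_pMr // ltr1n.
  move=> /(_ (le_lt_trans cr md)) h.
  have : (K * F c + 1) * (c - r) <= e.
    by rewrite -ler_pdivlMl // (le_trans cr) // /m ge_min; apply/orP; right; rewrite mulrC.
  move: h; rewrite ler_norml => /andP[h1 h2] h3.
  lra.
have Sc : S c.
  split; first by rewrite ac cb.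
  move=> r /andP[ar rc]; have [rc'|rc'] := ltP r c; first exact: below.
  by have -> : r = c by apply/eqP; rewrite eq_le rc rc'.
have cb' : c = b.
  apply/eqP; rewrite eq_le cb /=; rewrite leNgt; apply/negP => cb2.
  have Fc0 : 0 <= F c by apply: F0; rewrite ac cb.
  have [d d0 hd] := loc c (introT andP (conj ac cb)) eta eta0.
  set t := Num.min b (c + d / 2).
  have ct : c < t by rewrite lt_min cb2 /= ltrDl divr_gt0.
  have St : S t.
    split; first by rewrite (le_trans ac (ltW ct)) ge_min lexx.
    move=> r /andP[ar rt]; have [rc|cr] := leP r c; first by apply: Sc.2; rewrite ar rc.
    have rb : r <= b by rewrite (le_trans rt) // ge_min lexx.
    have := hd r; rewrite ar rb /= => /(_ isT).
    rewrite gtr0_norm ?subr_gt0 //.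
    have rcd : r - c < d.
      rewrite ltrBlDl (le_lt_trans rt) // (le_lt_trans (y := c + d / 2)) ?ge_min ?lexx ?orbT //.
      by rewrite ltrD2l ltr_pdivrMr // ltr_pMr // ltr1n.
    move=> /(_ rcd); rewrite ler_norml => /andP[_ h].
    (* F r <= F c + (K F c + eta) (r - c) <= H r *)
    have X1 : 1 <= expR (K * (c - a)) by rewrite -expR0 ler_expR mulr_ge0 // subr_ge0.
    have Y1 : 1 + K * (r - c) <= expR (K * (r - c)) by apply: expR_ge1Dx.
    have Hr : H r = expR (K * (r - c)) * expR (K * (c - a)) * (F a + eta * (c - a) + eta * (r - c)).
      by rewrite /H -expRD -mulrDr addrA subrK; congr (_ * _); ring.
    have B0 : 0 <= F a + eta * (c - a) by nra.
    have Hc : H c = expR (K * (c - a)) * (F a + eta * (c - a)) by [].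
    have hc := atc.
    rewrite Hr.
    set X := expR (K * (c - a)) in X1 Hc Hr *.
    set Y := expR (K * (r - c)) in Y1 Hr *.
    set B := F a + eta * (c - a) in B0 Hc Hr *.
    have rc0 : 0 < r - c by rewrite subr_gt0.
    have : F r <= H c + (K * H c + eta) * (r - c).
      have k1 : K * F c <= K * H c by rewrite ler_wpM2l.
      have k2 : (K * F c + eta) * (r - c) <= (K * H c + eta) * (r - c).
        by rewrite ler_wpM2r; lra.
      lra.
    rewrite Hc => h2; apply: (le_trans h2).
    have e1 : (1 + K * (r - c)) * (X * B) <= Y * X * B.
      by rewrite -mulrA ler_wpM2r //; apply: mulr_ge0 => //; lra.
    have e2 : eta * (r - c) <= Y * X * (eta * (r - c)).
      have Y1' : 1 <= Y by have := mulr_ge0 K0 (ltW rc0); lra.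
      have XY : 1 <= Y * X by rewrite -[1]mulr1 ler_pM.
      rewrite -[leLHS]mul1r ler_wpM2r //; apply: mulr_ge0; lra.
    nra.
  have := sup_upper_bound hasS St; rewrite -/c => tc.
  by move: ct; rewrite ltNge tc.
by have := Sc.2 b; rewrite -cb' lexx ac => /(_ isT).
Qed.

Lemma gron_bwd {R : realType} (F : R -> R) (K a b : R) :
  0 <= K -> a <= b -> (forall t, a <= t <= b -> 0 <= F t) -> locest F K a b ->
  F a <= expR (K * (b - a)) * F b.
Proof.
move=> K0 ab F0 loc.
have := @gron_fwd R (fun t => F (- t)) K (- b) (- a) K0.
rewrite lerN2 => /(_ ab); rewrite !opprK (addrC (- a)) => H; apply: H.
  by move=> t /andP[h1 h2]; apply: F0; rewrite -lerN2 opprK h2 -lerN2 opprK h1.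
move=> s /andP[h1 h2] e e0.
have hs : a <= - s <= b by rewrite -lerN2 opprK h2 -lerN2 opprK h1.
have [d d0 hd] := loc (- s) hs e e0.
exists d => // t /andP[t1 t2] ts.
have := hd (- t); rewrite -lerN2 opprK t2 -lerN2 opprK t1 /= => /(_ isT).
have e1 : `|- t - - s| = `|t - s| by rewrite -opprD normrN.
by rewrite e1 ts => /(_ isT).
Qed.

Lemma within_ed {R : realType} (A : set R) (f : R -> R) x :
  {within A, continuous f} -> A x -> forall e, 0 < e ->
  exists2 d, 0 < d & forall y, A y -> `|y - x| < d -> `|f y - f x| < e.
Proof.
move=> /subspace_continuousP cf Ax e e0.
have := cf x Ax => /cvgrPdist_lt /(_ e e0).
rewrite near_withinE => /nbhs_ballP [d d0 hd].
exists d => // y Ay yx; rewrite distrC; apply: hd => //.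
by rewrite /ball /= distrC.
Qed.

Lemma rep_cont {R : realType} (L : R) (f g : R -> R) : 0 <= L ->
  (@lebesgue_measure R).-integrable `[0, L] (EFin \o f) ->
  (forall x, 0 <= x <= L -> g x = g 0 + Rintegral (@lebesgue_measure R) `[0, x] f) ->
  {within `[0, L], continuous g}.
Proof.
move=> L0 intf rep.
apply: (@subspace_eq_continuous _ _ _ (fun x => g 0 + parameterized_integral (@lebesgue_measure R) 0 x f)).
  move=> x; rewrite inE /= in_itv /= => xL.
  by rewrite /from_subspace (rep x xL).
apply: within_continuousD.
  by apply: continuous_subspaceT => x; apply: cvg_cst.
exact: parameterized_integral_continuous.
Qed.

Lemma int_bound {R : realType} (m M c : R) (f : R -> R) : m <= M -> 0 <= c ->
  (@lebesgue_measure R).-integrable `[m, M] (EFin \o f) ->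
  {ae (@lebesgue_measure R), forall r, [set` `[m, M]] r -> `|f r| <= c} ->
  `|Rintegral (@lebesgue_measure R) `[m, M] f| <= c * (M - m).
Proof.
move=> mM c0 intf hae.
rewrite (le_trans (le_normr_Rintegral _ _)) //.
have intn : (@lebesgue_measure R).-integrable `[m, M] (EFin \o (fun t => `|f t|)).
  exact: integrable_norm.
rewrite -lee_fin /Rintegral fineK; last exact: integrable_fin_num.
apply: (@le_trans _ _ (\int[(@lebesgue_measure R)]_(x in `[m, M]) (cst c%:E) x)%E).
  by apply: ae_ge0_le_integral => //; case/integrableP: intn.
rewrite integral_cst // [X in (_ * X)%E]lebesgue_measure_itv /=.
move: mM; rewrite le_eqVlt => /predU1P[->|h].
  by rewrite ltxx subrr mulr0 mule0.
by rewrite lte_fin h -EFinB -EFinM.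
Qed.

Lemma rep_diff {R : realType} (L m M : R) (f g : R -> R) : 0 <= m -> m <= M -> M <= L ->
  (@lebesgue_measure R).-integrable `[0, L] (EFin \o f) ->
  (forall x, 0 <= x <= L -> g x = g 0 + Rintegral (@lebesgue_measure R) `[0, x] f) ->
  g M - g m = Rintegral (@lebesgue_measure R) `[m, M] f.
Proof.
move=> m0 mM ML intf rep.
rewrite (rep M); last by rewrite (le_trans m0 mM) ML.
rewrite (rep m); last by rewrite m0 (le_trans mM ML).
rewrite opprD addrACA subrr add0r.
have intM : (@lebesgue_measure R).-integrable `[0, M] (EFin \o f).
  by apply: integrableS intf => //; apply: subset_itvl; rewrite bnd_simp.
rewrite Rintegral_itvB ?bnd_simp //.
rewrite Rintegral_itv_obnd_cbnd //.
by apply: integrableS intM => //; apply: subset_itvr; rewrite bnd_simp.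
Qed.

Lemma cont_bound {R : realType} (L : R) (f : R -> R) :
  {within `[0, L], continuous f} -> exists B, forall t, 0 <= t <= L -> `|f t| <= B.
Proof.
move=> cf.
have /compact_bounded[M [_ mrt]] := continuous_compact cf (@segment_compact _ 0 L).
exists (M + 1) => t tL; apply: (mrt (M + 1)); first by rewrite ltrDl.
by exists t => //=; rewrite in_itv /=.
Qed.

Lemma linf_ae {R : realType} (A : set R) (f : R -> R) :
  (Linf_norm A f < +oo)%E ->
  {ae (@lebesgue_measure R), forall r, A r -> `|f r| <= fine (Linf_norm A f)}.
Proof.
move=> hfin.
have := ess_sup_ge (@lebesgue_measure R) (fun x => (if `[< A x >] then `|f x| else 0)%:E).
rewrite -/(Linf_norm A f).
apply: filterS => x h Ax; move: h; rewrite asboolT //; move: hfin.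
case: (Linf_norm A f) => [r _ h| //|_ h] /=; first by rewrite -lee_fin.
by move: h; rewrite leeNy_eq.
Qed.


Lemma linf_le {R : realType} (A : set R) (f : R -> R) (B : R) : 0 <= B ->
  (forall r, A r -> `|f r| <= B) -> (Linf_norm A f <= B%:E)%E.
Proof.
move=> B0 hB; apply/ess_supP; apply: nearW => x.
by case: asboolP => Ax; rewrite lee_fin // hB.
Qed.

Lemma alg_bound {R : realFieldType} (eps M0 h rho us dus Gi U B P S : R) :
  0 < eps -> 0 <= M0 -> 0 <= h -> 0 <= rho -> rho <= 1 ->
  `|Gi| <= M0 * (`|us| + rho) * h ->
  `|B - h * dus| <= rho * h -> `|U - h * us| <= rho * h ->
  `|S - 2 * us| <= 2 * rho -> `|P - 2 * dus| <= 2 * rho ->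
  `|(Gi - U) * P + B * S| <= h * (eps^-1 * M0 * (eps ^+ 2 * dus ^+ 2 + us ^+ 2)
       + rho * (4 * `|dus| + 4 * `|us| + 4 + M0 * (2 * `|us| + 2 * `|dus| + 2))).
Proof.
move=> e0 M00 h0 r0 r1 hG hB hU hS hP.
set e1 := B - h * dus; set e2 := S - 2 * us; set e3 := U - h * us; set e4 := P - 2 * dus.
have -> : (Gi - U) * P + B * S =
  Gi * P + (h * dus * e2 + e1 * (2 * us + e2) - h * us * e4 - e3 * (2 * dus + e4)).
  by rewrite /e1 /e2 /e3 /e4; ring.
have nP : `|P| <= 2 * `|dus| + 2 * rho.
  have -> : P = 2 * dus + e4 by rewrite /e4; ring.
  by rewrite (le_trans (ler_normD _ _)) // normrM ger0_norm // lerD2l.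
have F1 : `|Gi * P| <= M0 * (`|us| + rho) * h * (2 * `|dus| + 2 * rho).
  by rewrite normrM ler_pM.
have F2 : `|h * dus * e2| <= h * `|dus| * (2 * rho).
  by rewrite !normrM (ger0_norm h0) ler_pM // mulr_ge0.
have F3 : `|e1 * (2 * us + e2)| <= rho * h * (2 * `|us| + 2 * rho).
  rewrite normrM ler_pM //.
  by rewrite (le_trans (ler_normD _ _)) // normrM ger0_norm // lerD2l.
have F4 : `|h * us * e4| <= h * `|us| * (2 * rho).
  by rewrite !normrM (ger0_norm h0) ler_pM // mulr_ge0.
have F5 : `|e3 * (2 * dus + e4)| <= rho * h * (2 * `|dus| + 2 * rho).
  rewrite normrM ler_pM //.
  by rewrite (le_trans (ler_normD _ _)) // normrM ger0_norm // lerD2l.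
have F6 : M0 * h * (2 * `|us| * `|dus|) <= h * (eps^-1 * M0 * (eps ^+ 2 * dus ^+ 2 + us ^+ 2)).
  have amgm : 2 * `|us| * `|dus| <= eps^-1 * (eps ^+ 2 * dus ^+ 2 + us ^+ 2).
    rewrite ler_pdivlMl //.
    rewrite -[dus ^+ 2]real_normK ?num_real // -[us ^+ 2]real_normK ?num_real //.
    have := sqr_ge0 (eps * `|dus| - `|us|); rewrite sqrrB; nra.
  have -> : h * (eps^-1 * M0 * (eps ^+ 2 * dus ^+ 2 + us ^+ 2)) =
    M0 * h * (eps^-1 * (eps ^+ 2 * dus ^+ 2 + us ^+ 2)) by ring.
  by rewrite ler_wpM2l // mulr_ge0.
have G1 : M0 * h * rho * rho <= M0 * h * rho.
  by rewrite ler_piMr // ?mulr_ge0.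
have G2 : h * rho * rho <= h * rho.
  by rewrite ler_piMr // ?mulr_ge0.
have T : `|Gi * P + (h * dus * e2 + e1 * (2 * us + e2) - h * us * e4 - e3 * (2 * dus + e4))|
   <= `|Gi * P| + `|h * dus * e2| + `|e1 * (2 * us + e2)| + `|h * us * e4| + `|e3 * (2 * dus + e4)|.
  set a1 := Gi * P; set b1 := h * dus * e2; set c1 := e1 * (2 * us + e2).
  set d1 := h * us * e4; set f1 := e3 * (2 * dus + e4).
  have t1 := ler_normD a1 (b1 + c1 - d1 - f1).
  have t2 := ler_normB (b1 + c1 - d1) f1.
  have t3 := ler_normB (b1 + c1) d1.
  have t4 := ler_normD b1 c1.
  lra.
apply: (le_trans T).
nra.
Qed.

Lemma integrableD_R {R : realType} (D : interval R) (f g : R -> R) :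
  (@lebesgue_measure R).-integrable [set` D] (EFin \o f) ->
  (@lebesgue_measure R).-integrable [set` D] (EFin \o g) ->
  (@lebesgue_measure R).-integrable [set` D] (EFin \o (fun x => f x + g x)).
Proof.
move=> iF iG; have := integrableD _ iF iG.
by move=> /(_ ltac:(by [])); apply: eq_integrable => // x _; rewrite /= EFinD.
Qed.

Lemma integrableZ_R {R : realType} (D : interval R) (k : R) (f : R -> R) :
  (@lebesgue_measure R).-integrable [set` D] (EFin \o f) ->
  (@lebesgue_measure R).-integrable [set` D] (EFin \o (fun x => k * f x)).
Proof.
move=> iF; have := integrableZl _ k iF.
by move=> /(_ ltac:(by [])); apply: eq_integrable => // x _; rewrite /= EFinM.
Qed.

Lemma integrableB_R {R : realType} (D : interval R) (f g : R -> R) :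
  (@lebesgue_measure R).-integrable [set` D] (EFin \o f) ->
  (@lebesgue_measure R).-integrable [set` D] (EFin \o g) ->
  (@lebesgue_measure R).-integrable [set` D] (EFin \o (fun x => f x - g x)).
Proof.
move=> iF iG; have := integrableB _ iF iG.
by move=> /(_ ltac:(by [])); apply: eq_integrable => // x _; rewrite /= EFinB.
Qed.

Lemma integrable_cst_itv {R : realType} (m M c : R) :
  (@lebesgue_measure R).-integrable `[m, M] (EFin \o (fun _ => c)).
Proof.
apply: continuous_compact_integrable (@segment_compact _ m M) _.
by apply: continuous_subspaceT => x; apply: cvg_cst.
Qed.

Lemma int_dev {R : realType} (m M c rho : R) (f : R -> R) : m <= M -> 0 <= rho ->
  (@lebesgue_measure R).-integrable `[m, M] (EFin \o f) ->
  (forall r, m <= r <= M -> `|f r - c| <= rho) ->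
  `|Rintegral (@lebesgue_measure R) `[m, M] f - (M - m) * c| <= rho * (M - m).
Proof.
move=> mM r0 iF hf.
have ic := @integrable_cst_itv R m M c.
have := @int_bound R m M rho (fun r => f r - c) mM r0 (@integrableB_R R _ f (fun _ => c) iF ic).
rewrite RintegralB // Rintegral_cst // [X in fine X]lebesgue_measure_itv /=.
have -> : fine (if (m%:E < M%:E)%E then (M%:E - m%:E)%E else 0%E) = M - m.
  move: mM; rewrite le_eqVlt => /predU1P[->|h]; first by rewrite ltxx subrr.
  by rewrite lte_fin h.
rewrite mulrC; apply; apply: nearW => r; rewrite /= in_itv /=; exact: hf.
Qed.

Lemma ae_impl {R : realType} (P Q : R -> Prop) :
  {ae (@lebesgue_measure R), forall x, P x} -> (forall x, P x -> Q x) ->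
  {ae (@lebesgue_measure R), forall x, Q x}.
Proof.
case=> N [mN N0 hN] hPQ; exists N; split => // x /= nQ; apply: hN => /= hP.
by apply: nQ; apply: hPQ.
Qed.

Lemma comp_loc {R : realType} (L eps M0 a b : R) (u du ddu : R -> R) :
  0 < eps -> 0 <= a -> a <= b -> b <= L -> 0 <= M0 ->
  H2_rep L u du ddu ->
  {ae (@lebesgue_measure R), forall r, [set` `[a, b]] r ->
      `|eps ^+ 2 * ddu r + u r| <= M0 * `|u r|} ->
  locest (fun t => eps ^+ 2 * du t ^+ 2 + u t ^+ 2) (eps^-1 * M0) a b.
Proof.
move=> e0 a0 ab bL M00 [mddu iddu _ repdu repu] hae.
have L0 : 0 <= L by rewrite (le_trans a0) // (le_trans ab).
have iddu' : (@lebesgue_measure R).-integrable `[0, L] (EFin \o ddu) by [].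
have cdu := @rep_cont R L ddu du L0 iddu' repdu.
have idu : (@lebesgue_measure R).-integrable `[0, L] (EFin \o du).
  exact: continuous_compact_integrable (@segment_compact _ 0 L) cdu.
have cu := @rep_cont R L du u L0 idu repu.
have iu : (@lebesgue_measure R).-integrable `[0, L] (EFin \o u).
  exact: continuous_compact_integrable (@segment_compact _ 0 L) cu.
move=> s /andP[aS sb] e e_gt0.
pose Q t := eps ^+ 2 * du t ^+ 2 + u t ^+ 2.
change (exists2 d, 0 < d & forall t, a <= t <= b -> `|t - s| < d ->
  `|Q t - Q s| <= (eps^-1 * M0 * Q s + e) * `|t - s|).
set us := u s; set dus := du s.
set C := 4 * `|dus| + 4 * `|us| + 4 + M0 * (2 * `|us| + 2 * `|dus| + 2) + 1.
have W0 : 0 <= M0 * (2 * `|us| + 2 * `|dus| + 2).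
  by apply: mulr_ge0 => //; have := normr_ge0 us; have := normr_ge0 dus; lra.
have C0 : 0 < C by have := normr_ge0 us; have := normr_ge0 dus; rewrite /C; lra.
set rho := Num.min 1 (e / C).
have rho0 : 0 < rho by rewrite lt_min ltr01 divr_gt0.
have rho1 : rho <= 1 by rewrite ge_min lexx.
have rhoC : rho * C <= e.
  by rewrite -ler_pdivlMr // ge_min; apply/orP; right.
have sA : `[0, L]%classic s by rewrite /= in_itv /= (le_trans a0 aS) (le_trans sb bL).
have [d1 d1p hd1] := @within_ed R _ _ _ cu sA rho rho0.
have [d2 d2p hd2] := @within_ed R _ _ _ cdu sA rho rho0.
exists (Num.min d1 d2); first by rewrite lt_min d1p d2p.
suff key : forall m M, a <= m -> m <= M -> M <= b -> (m = s \/ M = s) ->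
    M - m < Num.min d1 d2 ->
    `|Q M - Q m| <= (eps^-1 * M0 * Q s + e) * (M - m).
  move=> t /andP[aT tb] ts.
  case: (leP s t) => st.
    have := key s t aS st tb (or_introl erefl).
    by rewrite ger0_norm ?subr_ge0 // in ts *; apply.
  have e1 : `|t - s| = s - t by rewrite distrC ger0_norm // subr_ge0 ltW.
  rewrite e1 in ts *; rewrite distrC.
  exact: key t s aT (ltW st) sb (or_intror erefl) ts.
move=> m M am mM Mb hs hMm.
have m0 : 0 <= m by rewrite (le_trans a0).
have ML : M <= L by rewrite (le_trans Mb).
have hr : forall r, m <= r <= M -> `|u r - us| < rho /\ `|du r - dus| < rho.
  move=> r /andP[mr rM].
  have rA : `[0, L]%classic r by rewrite /= in_itv /= (le_trans m0 mr) (le_trans rM ML).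
  have rs : `|r - s| < Num.min d1 d2.
    apply: le_lt_trans hMm.
    case: hs => <-.
      by rewrite ger0_norm ?subr_ge0 // lerD2r.
    by rewrite distrC ger0_norm ?subr_ge0 // lerD2l lerN2.
  move: rs; rewrite lt_min => /andP[r1 r2].
  by split; [exact: hd1 | exact: hd2].
set h := M - m.
have h0 : 0 <= h by rewrite subr_ge0.
have sub : [set` `[m, M]] `<=` [set` `[0, L]].
  by apply: subset_itv; rewrite bnd_simp.
have iddu2 : (@lebesgue_measure R).-integrable `[m, M] (EFin \o ddu).
  by apply: integrableS iddu'.
have idu2 : (@lebesgue_measure R).-integrable `[m, M] (EFin \o du).
  by apply: integrableS idu.
have iu2 : (@lebesgue_measure R).-integrable `[m, M] (EFin \o u).
  by apply: integrableS iu.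
have hA := @rep_diff R L m M ddu du m0 mM ML iddu' repdu.
have hB := @rep_diff R L m M du u m0 mM ML idu repu.
set A := Rintegral (@lebesgue_measure R) `[m, M] ddu.
set U := Rintegral (@lebesgue_measure R) `[m, M] u.
set Gi := Rintegral (@lebesgue_measure R) `[m, M] (fun r => eps ^+ 2 * ddu r + u r).
have iG : (@lebesgue_measure R).-integrable `[m, M] (EFin \o (fun r => eps ^+ 2 * ddu r + u r)).
  by apply: integrableD_R => //; apply: integrableZ_R.
have hGi : Gi = eps ^+ 2 * A + U.
  rewrite /Gi RintegralD //; last by apply: integrableZ_R.
  by rewrite RintegralZl.
have eQ : Q M - Q m = (Gi - U) * (du M + du m) + (u M - u m) * (u M + u m).
  rewrite hGi addrK /A -hA /Q; ring.
rewrite eQ.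
have hG : `|Gi| <= M0 * (`|us| + rho) * h.
  have c0 : 0 <= M0 * (`|us| + rho) by apply: mulr_ge0 => //; have := normr_ge0 us; lra.
  apply: (@int_bound R m M (M0 * (`|us| + rho)) _ mM c0 iG).
  eapply (@ae_impl R); first exact: hae.
  move=> r hr1 rin.
  move: rin; rewrite /= in_itv /= => /andP[mr rM].
  have rab : [set` `[a, b]] r by rewrite /= in_itv /= (le_trans am mr) (le_trans rM Mb).
  apply: (le_trans (hr1 rab)); rewrite ler_wpM2l //.
  have [hu _] := hr r (introT andP (conj mr rM)).
  have : `|u r| <= `|us| + `|u r - us|.
    by rewrite -[X in `|X|](subrK us) addrC (le_trans (ler_normD _ _)) // addrC.
  lra.
have hBb : `|(u M - u m) - h * dus| <= rho * h.
  rewrite hB.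
  apply: (@int_dev R m M dus rho du mM (ltW rho0) idu2).
  by move=> r hr'; apply: ltW; case: (hr r hr').
have hUb : `|U - h * us| <= rho * h.
  apply: (@int_dev R m M us rho u mM (ltW rho0) iu2).
  by move=> r hr'; apply: ltW; case: (hr r hr').
have [huM hduM] := hr M (introT andP (conj mM (lexx M))).
have [hum hdum] := hr m (introT andP (conj (lexx m) mM)).
have hS : `|(u M + u m) - 2 * us| <= 2 * rho.
  have -> : u M + u m - 2 * us = (u M - us) + (u m - us) by ring.
  by rewrite (le_trans (ler_normD _ _)) //; lra.
have hP : `|(du M + du m) - 2 * dus| <= 2 * rho.
  have -> : du M + du m - 2 * dus = (du M - dus) + (du m - dus) by ring.
  by rewrite (le_trans (ler_normD _ _)) //; lra.
have := @alg_bound _ eps M0 h rho us dus Gi U (u M - u m) (du M + du m) (u M + u m) e0 M00 h0 (ltW rho0) rho1 hG hBb hUb hS hP.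
move=> /le_trans; apply.
have hC : rho * (4 * `|dus| + 4 * `|us| + 4 + M0 * (2 * `|us| + 2 * `|dus| + 2)) <= e.
  by move: rhoC; rewrite /C; lra.
have := ler_wpM2l h0 hC.
rewrite /Q -/us -/dus.
lra.
Qed.

Lemma ae_impl3 {R : realType} (P1 P2 P3 Q : R -> Prop) :
  {ae (@lebesgue_measure R), forall x, P1 x} ->
  {ae (@lebesgue_measure R), forall x, P2 x} ->
  {ae (@lebesgue_measure R), forall x, P3 x} ->
  (forall x, P1 x -> P2 x -> P3 x -> Q x) ->
  {ae (@lebesgue_measure R), forall x, Q x}.
Proof.
move=> h1 h2 h3 H.
have h := negligibleU (negligibleU h1 h2) h3.
apply: negligibleS h => x /= nQ.
case: (pselect (P1 x)) => p1; last by left; left.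
case: (pselect (P2 x)) => p2; last by left; right.
case: (pselect (P3 x)) => p3; last by right.
by exfalso; apply: nQ; apply: H.
Qed.

Lemma locest_add {R : realType} (F G : R -> R) (K a b : R) : 0 <= K ->
  locest F K a b -> locest G K a b -> locest (fun t => F t + G t) K a b.
Proof.
move=> K0 hF hG s sab e e0.
have e20 : 0 < e / 2 by rewrite divr_gt0.
have [d1 d1p h1] := hF s sab _ e20.
have [d2 d2p h2] := hG s sab _ e20.
exists (Num.min d1 d2); first by rewrite lt_min d1p d2p.
move=> t tab; rewrite lt_min => /andP[t1 t2].
have := h1 t tab t1; have := h2 t tab t2.
have := normr_ge0 (t - s).
have := ler_normD (F t - F s) (G t - G s).
have -> : F t + G t - (F s + G s) = (F t - F s) + (G t - G s) by ring.
nra.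
Qed.

Lemma linf_ge0 {R : realType} (A : set R) (f : R -> R) : 0 <= fine (Linf_norm A f).
Proof.
have muT : (0 < (@lebesgue_measure R) [set: R])%E.
  by rewrite -set_itvNyy lebesgue_measure_itv /= ltry.
have := @ess_sup_gee _ _ _ (@lebesgue_measure R)
  (fun x => (if `[< A x >] then `|f x| else 0)%:E) 0 muT.
rewrite -/(Linf_norm A f).
case: (Linf_norm A f) => [r| |] //= h; rewrite -lee_fin; apply: h.
by apply: nearW => x; case: ifP.
Qed.

Lemma locest_ext {R : realType} (F G : R -> R) (K a b : R) :
  (forall t, F t = G t) -> locest F K a b -> locest G K a b.
Proof.
move=> FG hF s sab e e0; have [d d0 h] := hF s sab e e0.
by exists d => // t tab ts; rewrite -!FG; apply: h.
Qed.

Theorem lemma2p6 (R : realType) (L : R) (V : R -> R) (eps : R) (q : R -> R)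
  (hL : 0 < L) (hV : {within `[0, L], continuous V}) (heps : 0 < eps)
  (hq : in_Linf `[0, L] q) :
  forall (E : R) (u du ddu w dw ddw : R -> R),
    H2_H10_rep L u du ddu -> H2_H10_rep L w dw ddw ->
    schrodinger_ae L eps E V q u ddu -> schrodinger_ae L eps E V q w ddw ->
    let En := fun x => eps ^+ 2 * (du x ^+ 2 + dw x ^+ 2) + (u x ^+ 2 + w x ^+ 2) in
    forall x y : R, 0 <= x <= L -> 0 <= y <= L ->
      En x <= expR (eps^-1 * `|x - y| *
                (fine (Linf_norm `[Num.min x y, Num.max x y] (fun t => V t - E + 1))
                 + fine (Linf_norm `[0, L] q))) * En y.
Proof.
move=> E u du ddu w dw ddw [Hu _ _] [Hw _ _] Su Sw En x y hx hy.
set M2 := fine (Linf_norm `[0, L] q).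
have M20 : 0 <= M2 by apply: linf_ge0.
have hq1 := @linf_ae R _ _ hq.2.
have [BV hBV] := @cont_bound R L V hV.
have main : forall a b, 0 <= a -> a <= b -> b <= L ->
    locest En (eps^-1 * (fine (Linf_norm `[a, b] (fun t => V t - E + 1)) + M2)) a b.
  move=> a b a0 ab bL.
  set M1 := fine (Linf_norm `[a, b] (fun t => V t - E + 1)).
  have M10 : 0 <= M1 by apply: linf_ge0.
  have BV0 : 0 <= BV.
    by apply: le_trans (hBV 0 _); rewrite ?normr_ge0 // lexx ltW.
  have fin1 : (Linf_norm `[a, b] (fun t => (V t - E + 1)%R) < +oo)%E.
    apply: (@le_lt_trans _ _ ((BV + `|E| + 1)%R)%:E); last exact: ltry.
    apply: (@linf_le R); first by have := normr_ge0 E; lra.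
    move=> r; rewrite /= in_itv /= => /andP[ar rb].
    have := hBV r; rewrite (le_trans a0 ar) (le_trans rb bL) => /(_ isT) hr.
    have := ler_normD (V r - E) 1; have := ler_normB (V r) E.
    rewrite normr1; lra.
  have hV1 := @linf_ae R _ _ fin1.
  have aeg : forall (f ddf : R -> R), schrodinger_ae L eps E V q f ddf ->
      {ae (@lebesgue_measure R), forall r, [set` `[a, b]] r ->
        `|eps ^+ 2 * ddf r + f r| <= (M1 + M2) * `|f r|}.
    move=> f ddf Sf.
    apply: (@ae_impl3 R _ _ _ _ Sf hV1 hq1) => r h1 h2 h3 rab.
    move: (rab); rewrite /= in_itv /= => /andP[ar rb].
    have r0L : [set` `[0, L]] r by rewrite /= in_itv /= (le_trans a0 ar) (le_trans rb bL).
    have := h1 r0L => eq1.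
    have -> : eps ^+ 2 * ddf r + f r = (V r - E + 1 + q r) * f r.
      by move: eq1; lra.
    rewrite normrM ler_wpM2r //.
    have := h2 rab; have := h3 r0L; have := ler_normD (V r - E + 1) (q r); rewrite /M1 /M2; lra.
  have hu := @comp_loc R L eps _ a b u du ddu heps a0 ab bL (addr_ge0 M10 M20) Hu (aeg _ _ Su).
  have hw := @comp_loc R L eps _ a b w dw ddw heps a0 ab bL (addr_ge0 M10 M20) Hw (aeg _ _ Sw).
  have K0 : 0 <= eps^-1 * (M1 + M2) by apply: mulr_ge0; [rewrite invr_ge0 ltW | rewrite addr_ge0].
  apply: (@locest_ext R _ _ _ a b _ (@locest_add R _ _ _ a b K0 hu hw)).
  by move=> t; rewrite /En; ring.
have En0 : forall t, 0 <= En t.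
  move=> t; rewrite /En.
  have := sqr_ge0 (du t); have := sqr_ge0 (dw t); have := sqr_ge0 (u t); have := sqr_ge0 (w t).
  have := sqr_ge0 eps; nra.
have M0ab : forall a b, 0 <= eps^-1 * (fine (Linf_norm `[a, b] (fun t => V t - E + 1)) + M2).
  move=> a b; apply: mulr_ge0; first by rewrite invr_ge0 ltW.
  by rewrite addr_ge0 // linf_ge0.
case/andP: hx => x0 xL; case/andP: hy => y0 yL.
case: (leP x y) => xy.
  have ea : Num.min x y = x by apply/min_idPl.
  have eb : Num.max x y = y by apply/max_idPr.
  idtac.
  have := @gron_bwd R En _ x y (M0ab x y) xy (fun t _ => En0 t) (main x y x0 xy yL).
  congr (_ <= expR _ * _).
  by rewrite distrC ger0_norm ?subr_ge0 //; ring.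
have ea : Num.min x y = y by apply/min_idPr; apply: ltW.
have eb : Num.max x y = x by apply/max_idPl; apply: ltW.
idtac.
have := @gron_fwd R En _ y x (M0ab y x) (ltW xy) (fun t _ => En0 t) (main y x y0 (ltW xy) xL).
congr (_ <= expR _ * _).
by rewrite ger0_norm ?subr_ge0 ?ltW //; ring.
Qed.
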